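(* Let $m,n,k$ be positive integers with $(m,k-1)=1$ and $n=\mathrm{ind}_m(k)$, and let $G=G(m,n,k)=\langle a,b;\ a^m=1,\ b^n=1,\ b^{-1}ab=a^k\rangle$. For every $g\in G$, $\rho(g)$ and $\lambda(g)$ are mu-maps; specifically, for $r\in\mathbb{Z}_m$, $s\in\mathbb{Z}_n$, $\rho(a^rb^s)=\mu(k_s,rk^s)$ and $\lambda(a^rb^s)=\mu(-k_s,-rk^s)$.
   Context: $\mathrm{ind}_m(k)$ is the least positive integer $d$ with $k^d\equiv1\pmod m$; $k_t=k^t-1\pmod m$. Elements of $G$ are written uniquely as $a^ib^j$, $i\in\mathbb{Z}_m$, $j\in\mathbb{Z}_n$. Commutators are $[x,y]=x^{-1}y^{-1}xy$; $(x)\rho(g)=[x,g]$ and $(x)\lambda(g)=[g,x]$ (maps written on the right). For $x,y\in\mathbb{Z}_m$, the mu-map $\mu(x,y):G\to G$ is $(a^ib^j)\mu(x,y)=a^N$ with $N=xik^j-yk_j\pmod m$. *)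

(* Defs.v *)
From mathcomp Require Import all_boot all_order all_algebra all_fingroup.
Set Implicit Arguments. Unset Strict Implicit. Unset Printing Implicit Defensive.
Import GRing.Theory Num.Theory.

Definition is_ind (m k n : nat) : Prop :=
  [/\ 0 < n, k ^ n = 1 %[mod m]
    & forall d, 0 < d -> k ^ d = 1 %[mod m] -> n <= d].

(* k_t = k^t - 1 (as an integer; only its class mod m matters). *)
Definition kt (k t : nat) : int := ((k ^ t)%:Z - 1)%R.

(* The mu-map mu(x,y) evaluated at the element a^i b^j :
   a^N with N = x i k^j - y k_j (mod m). *)
Definition mu (gT : finGroupType) (a : gT) (m k : nat) (x y : int) (i j : nat) : gT :=
  (a ^+ `|((x * i%:Z * (k ^ j)%:Z - y * kt k j) %% m%:Z)%Z|%N)%g.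

(* Main.v *)
Require Import Defs.
From mathcomp Require Import all_boot all_order all_algebra all_fingroup.
From mathcomp Require Import ring.
Import GRing.Theory Num.Theory.

Section H.
Variables (gT : finGroupType) (a b : gT) (k : nat).
Hypothesis hab : (a ^ b = a ^+ k)%g.

Lemma conjXn e j : ((a ^+ e) ^ (b ^+ j) = a ^+ (e * k ^ j))%g.
Proof.
elim: j => [|j IH]; first by rewrite expg0 conjg1 expn0 muln1.
by rewrite expgSr conjgM IH conjXg hab -expgM mulnC expnSr mulnA.
Qed.

Lemma swapab u v : (a ^+ u * b ^+ v = b ^+ v * a ^+ (u * k ^ v))%g.
Proof. by rewrite conjgC conjXn. Qed.

Lemma invexp m P : (a ^+ m.+1 = 1)%g -> ((a ^+ P)^-1 = a ^+ (P * m))%g.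
Proof.
move=> hm; apply/eqP; rewrite eq_invg_mul -expgD.
have -> : P + P * m = m.+1 * P by rewrite mulSn mulnC.
by rewrite expgM hm expg1n.
Qed.

Lemma commmain m i j r s : (a ^+ m.+1 = 1)%g ->
  ([~ a ^+ i * b ^+ j, a ^+ r * b ^+ s] =
   a ^+ ((r * k ^ s * k ^ j + i * k ^ j) * m + (i * k ^ j * k ^ s + r * k ^ s)))%g.
Proof.
move=> hm.
have gx : (a ^+ r * b ^+ s * (a ^+ i * b ^+ j) =
     b ^+ (s + j) * a ^+ (r * k ^ s * k ^ j + i * k ^ j))%g.
  by rewrite !swapab mulgA -(mulgA (b ^+ s)%g) swapab mulgA -expgD -mulgA -expgD.
have xg : (a ^+ i * b ^+ j * (a ^+ r * b ^+ s) =
     b ^+ (s + j) * a ^+ (i * k ^ j * k ^ s + r * k ^ s))%g.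
  by rewrite !swapab mulgA -(mulgA (b ^+ j)%g) swapab mulgA -expgD -mulgA -expgD addnC.
rewrite commgEl /conjg !mulgA -invgM gx -!mulgA (mulgA (a ^+ i)%g) (mulgA _ (a ^+ r)%g) -(mulgA (a ^+ i * b ^+ j)%g) xg invgM -mulgA (mulgA (b ^+ (s + j))^-1)%g.
by rewrite mulVg mul1g (invexp _ _ hm) -expgD.
Qed.

Lemma finalstep m E (P N : int) : (a ^+ m = 1)%g -> Posz E = (P * Posz m + N)%R ->
  (a ^+ E = a ^+ `|(N %% Posz m)%Z|%N)%g.
Proof.
move=> hm hE.
have -> : (N %% Posz m)%Z = Posz (E %% m) by rewrite -modz_nat hE modzMDl.
by rewrite absz_nat expg_mod.
Qed.
End H.

Theorem lemma3p2 (gT : finGroupType) (a b : gT) (m n k : nat) :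
  0 < m -> 0 < n -> 0 < k -> coprime m (k - 1) -> is_ind m k n ->
  (a ^+ m = 1)%g -> (b ^+ n = 1)%g -> (a ^ b = a ^+ k)%g ->
  (forall i j i' j', i < m -> j < n -> i' < m -> j' < n ->
     (a ^+ i * b ^+ j = a ^+ i' * b ^+ j')%g -> i = i' /\ j = j') ->
  forall r s, r < m -> s < n ->
  forall i j, i < m -> j < n ->
    [~ a ^+ i * b ^+ j, a ^+ r * b ^+ s]%g
      = mu a m k (kt k s) ((r * k ^ s)%N%:Z) i j
    /\ [~ a ^+ r * b ^+ s, a ^+ i * b ^+ j]%g
      = mu a m k (- kt k s)%R (- (r * k ^ s)%N%:Z)%R i j.
Proof.
case: m => [//|m] _ _ _ _ _ hm _ hab _ r s _ _ i j _ _.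
rewrite /mu /kt !(@commmain _ _ _ _ hab _ _ _ _ _ hm); split.
- apply: (@finalstep _ a _ _ ( (r * k ^ s * k ^ j + i * k ^ j)%N%:Z) _ hm).
  rewrite !(PoszD, PoszM) -addn1 PoszD. ring.
- apply: (@finalstep _ a _ _ ( (i * k ^ j * k ^ s + r * k ^ s)%N%:Z) _ hm).
  rewrite !(PoszD, PoszM) -addn1 PoszD. ring.
Qed.
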